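(* For every $n\ge1$, the set $\mathrm{StoRec}_n$ of SR states on $K_n^0$ equals $\mathrm{conv}(\mathrm{DetRec}_n)\cap\mathbb{Z}^n$, where $\mathrm{DetRec}_n$ is the set of DR states on $K_n^0$. That is, $c\in\mathbb{Z}_{\ge 0}^n$ is SR if and only if there exist DR states $c^{(1)},\dots,c^{(k)}$ and $\lambda_1,\dots,\lambda_k\in[0,1]$ with $\sum_i\lambda_i=1$ and $c=\sum_i\lambda_i c^{(i)}$.
   Context: $K_n^0$ is the complete graph on vertex set $\{0,1,\dots,n\}$ with sink $0$; every vertex has degree $n$. A configuration is $c\in\mathbb{Z}_{\ge0}^n$, stable if $c_i\le n-1$ for all $i$. ASM: an unstable vertex topples by sending one grain to each neighbour (grains to the sink disappear). SSM (parameter $p\in(0,1)$): an unstable vertex $i$, independently for each incident edge, sends one grain along it with probability $p$, otherwise keeps it. Each model gives a Markov chain on stable configurations: add a grain at vertex $i$ with probability $\mu_i>0$, then stabilise. DR = recurrent for the ASM chain, SR = recurrent for the SSM chain. $\mathrm{conv}$ denotes convex hull in $\mathbb{R}^n$. *)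

(* Defs.v *)
From HB Require Import structures.
From mathcomp Require Import all_boot all_order all_algebra.
From mathcomp Require Import reals.
Set Implicit Arguments. Unset Strict Implicit. Unset Printing Implicit Defensive.
Import Order.TTheory GRing.Theory Num.Theory.

(* Sandpiles on K_n^0: non-sink vertices are 'I_n (standing for 1..n), the
   sink 0 is treated separately.  Every vertex has degree n.
   A configuration is a vector in Z_{>=0}^n. *)
Definition config (n : nat) := {ffun 'I_n -> nat}.

Definition stable n (c : config n) : Prop := forall i, c i <= n.-1.

Definition add_grain n (c : config n) (i : 'I_n) : config n :=
  [ffun j => c j + (j == i)].

(* ASM toppling of an unstable vertex i: i loses n grains, every other
   non-sink vertex gains one (one grain goes to the sink and vanishes). *)
Definition asm_topple n (c d : config n) : Prop :=
  exists i : 'I_n, n <= c i /\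
    d = [ffun j => if j == i then c j - n else c j + 1].

(* SSM toppling of an unstable vertex i: for each incident edge the grain is
   sent or kept; S is the set of non-sink neighbours receiving a grain, and
   b says whether a grain is sent along the edge to the sink.  Since
   p in (0,1), every such choice has positive probability. *)
Definition ssm_topple n (c d : config n) : Prop :=
  exists (i : 'I_n) (S : {set 'I_n}) (b : bool),
    [/\ n <= c i, i \notin S &
      d = [ffun j => if j == i then c j - (#|S| + b) else c j + (j \in S)]].

Inductive star (T : Type) (r : T -> T -> Prop) : T -> T -> Prop :=
| star_refl x : star r x x
| star_step x y z : r x y -> star r y z -> star r x z.

(* Support of the Markov chain transition kernel: add a grain at some vertex
   i (mu_i > 0 for all i) and stabilise with the given toppling rule. *)
Definition chain_step n (topple : config n -> config n -> Prop)
  (c d : config n) : Prop :=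
  exists i : 'I_n, star topple (add_grain c i) d /\ stable d.

(* Recurrent state of a finite Markov chain on stable configurations:
   every state reachable from c leads back to c (c lies in a closed
   communicating class). *)
Definition recurrent n (topple : config n -> config n -> Prop)
  (c : config n) : Prop :=
  stable c /\
  forall d, star (chain_step topple) c d -> star (chain_step topple) d c.

Definition DR n (c : config n) : Prop := recurrent (@asm_topple n) c.
Definition SR n (c : config n) : Prop := recurrent (@ssm_topple n) c.

Local Open Scope ring_scope.
Definition in_conv_DR (R : realType) n (c : config n) : Prop :=
  exists (k : nat) (cs : 'I_k -> config n) (lam : 'I_k -> R),
    [/\ forall l, DR (cs l),
        forall l, 0 <= lam l <= 1,
        \sum_(l < k) lam l = 1 &
        forall v : 'I_n, ((c v)%:R : R) = \sum_(l < k) lam l * (cs l v)%:R].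

(* Main.v *)
Require Import Defs.
From mathcomp Require Import all_boot all_order all_algebra reals.
From mathcomp Require Import zify.

Set Implicit Arguments. Unset Strict Implicit. Unset Printing Implicit Defensive.

Lemma star_trans T (r : T -> T -> Prop) x y z :
  star r x y -> star r y z -> star r x z.
Proof. by elim=> [//|a b e Hab _ IH] /IH; apply: star_step. Qed.

Lemma star_one T (r : T -> T -> Prop) x y : r x y -> star r x y.
Proof. by move=> H; apply: star_step H (star_refl _ _). Qed.

Lemma star_mono T (r r' : T -> T -> Prop) x y :
  (forall a b, r a b -> r' a b) -> star r x y -> star r' x y.
Proof.
move=> H; elim=> [a|a b e Hab _ IH]; first exact: star_refl.
exact: star_step (H _ _ Hab) IH.
Qed.


Section Basics.
Variable n : nat.
Implicit Types c d x y z : config n.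

Definition cmax : config n := [ffun _ => n.-1].

Lemma star_chain_stable (t : config n -> config n -> Prop) x y :
  stable x -> star (chain_step t) x y -> stable y.
Proof. by move=> Hx H; elim: H Hx => // a b e [i [_ Hb]] _ IH _; apply: IH. Qed.

Definition csum c := \sum_(i < n) c i.

Lemma csum_lt c d : (forall i, c i <= d i) -> (exists i, c i < d i) -> csum c < csum d.
Proof.
move=> Hle [i Hi]; rewrite /csum (bigD1 i) //= [X in _ < X](bigD1 i) //=.
rewrite -addSn leq_add //; exact: leq_sum.
Qed.

Lemma csum_le_stable c : stable c -> csum c <= n * n.-1.
Proof.
move=> Hc; rewrite /csum.
apply: (@leq_trans (\sum_(i < n) n.-1)); first by apply: leq_sum => i _; apply: Hc.
by rewrite sum_nat_const card_ord.
Qed.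

(* adding grains without toppling *)
Lemma additions (t : config n -> config n -> Prop) x y :
  stable y -> (forall i, x i <= y i) -> star (chain_step t) x y.
Proof.
move=> Hy.
move Hk: (csum y - csum x) => k.
elim: k x Hk => [|k IH] x Hk Hle.
  have -> : x = y.
    apply/ffunP => i; apply/eqP; rewrite eqn_leq Hle /=.
    case: (leqP (y i) (x i)) => // Hlt.
    have := csum_lt Hle (ex_intro _ i Hlt); lia.
  exact: star_refl.
have [i Hi] : exists i, x i < y i.
  case: (pickP (fun i => x i < y i)) => [i Hi|H]; first by exists i.
  suff : x = y by move=> E; move: Hk; rewrite E subnn.
  apply/ffunP => i; apply/eqP; rewrite eqn_leq Hle /=.
  by move: (H i) => /= /negbT; rewrite -leqNgt.
have Hst : stable (add_grain x i).
  move=> j; rewrite ffunE; case: eqP => [->|_]; last by rewrite addn0 (leq_trans (Hle j)).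
  by rewrite addn1 (leq_trans Hi).
apply: (star_step (y := add_grain x i)).
  by exists i; split => //; apply: star_refl.
apply: IH.
  have : csum (add_grain x i) = (csum x).+1.
    rewrite /csum (bigD1 i) //= [X in _ = X.+1](bigD1 i) //= ffunE eqxx addn1 addSn.
    congr (_.+1 + _); apply: eq_bigr => j Hj; rewrite ffunE (negbTE Hj) addn0 //.
  have := csum_lt Hle (ex_intro _ i Hi). lia.
move=> j; rewrite ffunE; case: eqP => [->|_]; last by rewrite addn0.
by rewrite addn1.
Qed.

Lemma recurrentP (t : config n -> config n -> Prop) c :
  recurrent t c <-> stable c /\ star (chain_step t) cmax c.
Proof.
have Hmax : stable cmax by move=> i; rewrite ffunE.
have Hup z : stable z -> star (chain_step t) z cmax.
  move=> Hz; apply: additions => // i; rewrite ffunE; exact: Hz.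
split=> [[Hc H]|[Hc H]]; first by split => //; apply: H; apply: Hup.
split => // d Hd; apply: star_trans H.
by apply: Hup; apply: star_chain_stable Hd.
Qed.

End Basics.

Section Good.
Variable n : nat.
Implicit Types c d x y z : config n.

Definition good c := forall A : {set 'I_n}, 'C(#|A|, 2) <= \sum_(v in A) c v.

Lemma bin2S a : 'C(a.+1, 2) = 'C(a, 2) + a.
Proof. by rewrite binS bin1. Qed.

Lemma sum_ind (B S : {set 'I_n}) : \sum_(j in B) ((j \in S) : nat) = #|B :&: S|.
Proof.
rewrite -sum1_card big_mkcond /= [RHS]big_mkcond /=; apply: eq_bigr => j _.
by rewrite inE; case: (j \in B); case: (j \in S).
Qed.

Lemma arith (C a s ci Sa Sd Sall m b : nat) : C <= s -> Sa + Sd = Sall ->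
  Sd <= m - a.+1 -> Sall <= m.-1 -> a < m -> m <= ci -> b <= 1 ->
  C + a <= ci - (Sall + b) + (s + Sa).
Proof. lia. Qed.

Lemma good_add c i : good c -> good (add_grain c i).
Proof.
move=> Hc A; apply: (leq_trans (Hc A)); apply: leq_sum => j _.
by rewrite ffunE leq_addr.
Qed.

Lemma good_ssm c d : good c -> ssm_topple c d -> good d.
Proof.
move=> Hc [i [S [b [Hi HiS ->]]]] A.
case: (boolP (i \in A)) => HiA; last first.
  apply: (leq_trans (Hc A)); apply: leq_sum => j Hj.
  rewrite ffunE; case: eqP => [E|_]; last exact: leq_addr.
  by move: HiA; rewrite -E Hj.
rewrite (bigD1 i) //= ffunE eqxx.
have -> : \sum_(j in A | j != i) [ffun j => if j == i then c j - (#|S| + b)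
           else c j + (j \in S)] j = \sum_(j in A :\ i) c j + #|(A :\ i) :&: S|.
  rewrite -sum_ind -big_split /=; apply: eq_big => j.
    by rewrite !inE andbC.
  by move/andP=> [_ /negbTE Hj]; rewrite ffunE Hj.
have H1 := Hc (A :\ i).
have H2 : #|A| = (#|A :\ i|).+1 by rewrite (cardsD1 i A) HiA.
have H3 := cardsID (A :\ i) S.
have H4 : #|S :\: (A :\ i)| <= n - #|A|.
  have -> : n - #|A| = #|~: A| by have := cardsC A; rewrite card_ord; lia.
  apply: subset_leq_card; apply/subsetP => j; rewrite !inE.
  move=> /andP [H HjS]; apply/negP => HjA; move: H; rewrite HjA andbT negbK => /eqP E.
  by move: HiS; rewrite -E HjS.
have H5 : #|S| <= n.-1.
  have -> : n.-1 = #|[set~ i]| by rewrite cardsC1 card_ord.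
  apply: subset_leq_card; apply/subsetP => j Hj.
  by rewrite !inE; apply/eqP => E; move: HiS; rewrite -E Hj.
have HA : #|A| <= n by have := max_card (mem A); rewrite card_ord.
rewrite H2 bin2S setIC.
have : b <= 1 by case: b.
move=> Hb; rewrite H2 in H4 HA; exact: (arith H1 H3 H4 H5 HA Hi Hb).
Qed.

Lemma asm_ssm (hn : 0 < n) c d : asm_topple c d -> ssm_topple c d.
Proof.
move=> [i [Hi ->]]; exists i, [set~ i], true; split => //.
  by rewrite !inE negbK.
apply/ffunP => j; rewrite !ffunE cardsC1 card_ord !inE.
case: eqP => // _; congr (_ - _); lia.
Qed.

Lemma good_cmax : good (cmax n).
Proof.
move=> A; rewrite (eq_bigr (fun _ => n.-1)) => [|j _]; last by rewrite ffunE.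
rewrite sum_nat_const bin2.
have HA : #|A| <= n by have := max_card (mem A); rewrite card_ord.
apply: (leq_trans (half_leq (leqnn _))).
have : (#|A| * (#|A|).-1)./2 <= #|A| * (#|A|).-1.
  by rewrite leq_half_double -addnn; lia.
move=> H; apply: (leq_trans H); apply: leq_mul => //; lia.
Qed.

Lemma good_star_ssm c d : star (@ssm_topple n) c d -> good c -> good d.
Proof. by elim=> // a b e Hab _ IH Ha; apply: IH; apply: good_ssm Hab. Qed.

Lemma good_reach c d : star (chain_step (@ssm_topple n)) c d -> good c -> good d.
Proof.
elim=> // a b e [i [Hs _]] _ IH Ha; apply: IH.
exact: (good_star_ssm Hs (good_add i Ha)).
Qed.

Lemma SR_good c : SR c -> stable c /\ good c.
Proof.
move=> /recurrentP [Hs H]; split => //; exact: good_reach H good_cmax.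
Qed.

Lemma DR_good (hn : 0 < n) c : DR c -> stable c /\ good c.
Proof.
move=> /recurrentP [Hs H]; split => //.
have Hm : forall a b, chain_step (@asm_topple n) a b -> chain_step (@ssm_topple n) a b.
  move=> a b [i [Hst Hb]]; exists i; split => //; exact: (star_mono (@asm_ssm hn) Hst).
exact: (good_reach (star_mono Hm H) (good_cmax)).
Qed.

End Good.

Section Aval.
Variable n : nat.
Implicit Types c d x y z : config n.

Definition Pk c := forall k, #|[set w | c w < k]| <= k.

Variables (x : config n) (i : 'I_n).
Hypothesis Hxs : stable x.
Hypothesis Hxi : x i = n.-1.
Hypothesis HQ : forall k, 0 < k < n -> #|[set w | x w < k]| < k.

Let y := add_grain x i.

Definition stT (T : {set 'I_n}) : config n :=
  [ffun w => if w \in T then y w + #|T| - n.+1 else y w + #|T|].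

Lemma n_pos : 0 < n.
Proof. by case: n i => [[]|]. Qed.

Lemma y_i : y i = n.
Proof. by rewrite /y ffunE eqxx Hxi addn1 prednK // n_pos. Qed.

Lemma y_ne w : w != i -> y w = x w.
Proof. by move=> H; rewrite /y ffunE (negbTE H) addn0. Qed.

Lemma topple_step (T : {set 'I_n}) w : w \notin T -> n <= y w + #|T| ->
  (forall u, u \in T -> n < y u + #|T|) ->
  asm_topple (stT T) (stT (w |: T)).
Proof.
move=> HwT Hw Hinv; exists w; split; first by rewrite ffunE (negbTE HwT).
apply/ffunP => j; rewrite !ffunE cardsU1 HwT add1n !inE.
case: (eqVneq j w) => [->|Hjw] /=; first by rewrite (negbTE HwT); move: Hw; rewrite /y ffunE; lia.
case: (boolP (j \in T)) => HjT; last by lia.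
have := Hinv j HjT; rewrite /y ffunE; set t := #|T|; lia.
Qed.

Lemma progress (T : {set 'I_n}) : T != setT -> exists2 w, w \notin T & n <= y w + #|T|.
Proof.
move=> HT.
case: (pickP [pred w | (w \notin T) && (n <= y w + #|T|)]) => [w /andP [H1 H2]|H].
  by exists w.
exfalso.
case: (boolP (i \in T)) => HiT; last first.
  by move: (H i); rewrite /= HiT y_i leq_addr.
have HTn : #|T| < n.
  rewrite ltn_neqAle; apply/andP; split; last by have := max_card (mem T); rewrite card_ord.
  apply/negP => /eqP E; move: HT; rewrite eqEcard subsetT cardsT card_ord E leqnn.
  by [].
have HT1 : 0 < #|T| by apply/card_gt0P; exists i.
have Hsub : ~: T \subset [set w | x w < n - #|T|].
  apply/subsetP => w; rewrite !inE => HwT; move: (H w); rewrite /= HwT /=.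
  have Hwi : w != i by apply: contraNneq HwT => ->.
  rewrite y_ne // => /negbT; rewrite -ltnNge; set t := #|T|; lia.
have H1 := subset_leq_card Hsub.
have Hc := cardsC T; rewrite card_ord in Hc.
have H2 := HQ (k := n - #|T|).
move: H1 Hc H2 HTn HT1; set t := #|T|; set t2 := #|~: T|; set t3 := #|_|; lia.
Qed.

Lemma aval_gen m (T : {set 'I_n}) : #|~: T| = m -> (forall u, u \in T -> n < y u + #|T|) ->
  star (@asm_topple n) (stT T) (stT setT).
Proof.
elim: m T => [|m IH] T Hm Hinv.
  have -> : T = setT by apply/setP => w; move/eqP: Hm; rewrite cards_eq0 => /eqP/setP/(_ w); rewrite !inE; case: (w \in T).
  exact: star_refl.
have HT : T != setT by apply: contra_eqN Hm => /eqP ->; rewrite setCT cards0.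
case: (progress HT) => w HwT Hw.
apply: star_step (topple_step HwT Hw Hinv) _.
apply: IH.
  have E : ~: (w |: T) = (~: T) :\ w.
    by apply/setP => u; rewrite !inE; case: (u == w); case: (u \in T).
  have Hw' : w \in ~: T by rewrite inE.
  by move: Hm; rewrite E (cardsD1 w (~: T)) Hw' add1n => -[].
move=> u; rewrite cardsU1 HwT add1n !inE => /orP [/eqP ->|Hu]; first by rewrite addnS ltnS.
by rewrite addnS ltnS ltnW // Hinv.
Qed.

Lemma aval_chain : chain_step (@asm_topple n) x
  [ffun w => if w == i then x w else (x w).-1].
Proof.
exists i; split; last first.
  move=> w; rewrite ffunE; case: eqP => _; first exact: Hxs.
  exact: leq_trans (leq_pred _) (Hxs w).
have E1 : add_grain x i = stT set0.
  by apply/ffunP => w; rewrite /stT !ffunE in_set0 cards0 !addn0.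
have E2 : stT setT = [ffun w => if w == i then x w else (x w).-1].
  apply/ffunP => w; rewrite /stT [LHS]ffunE [RHS]ffunE inE cardsT card_ord.
  case: (eqVneq w i) => [->|Hwi]; first by rewrite y_i Hxi; lia.
  by rewrite y_ne //; lia.
rewrite E1 -E2; apply: (aval_gen (m := n)) => //.
by rewrite setC0 cardsT card_ord.
by move=> u; rewrite in_set0.
Qed.

End Aval.

Section PDR.
Variable n : nat.
Hypothesis hn : 0 < n.
Implicit Types c d x y z : config n.

Lemma exists_top c : stable c -> Pk c -> exists i, c i = n.-1.
Proof.
move=> Hs HP.
case: (pickP (fun w => c w == n.-1)) => [i /eqP Hi|H]; first by exists i.
exfalso; have := HP n.-1.
have -> : [set w | c w < n.-1] = setT.
  apply/setP => w; rewrite !inE; move: (H w) (Hs w) => /= /negbT; lia.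
by rewrite cardsT card_ord; lia.
Qed.

Lemma P_reach m c : n * n.-1 - csum c <= m -> stable c -> Pk c ->
  star (chain_step (@asm_topple n)) (cmax n) c.
Proof.
elim: m c => [|m IH] c Hm Hs HP.
  have -> : c = cmax n.
    apply/ffunP => w; rewrite ffunE; apply/eqP; rewrite eqn_leq Hs /=.
    case: (leqP n.-1 (c w)) => // Hlt.
    have Hlt' : csum c < csum (cmax n).
      apply: csum_lt => [j|]; first by rewrite ffunE Hs.
      by exists w; rewrite ffunE.
    have Ecm : csum (cmax n) = n * n.-1.
      rewrite /csum (eq_bigr (fun _ => n.-1)) => [|j _]; last by rewrite ffunE.
      by rewrite sum_nat_const card_ord.
    lia.
  exact: star_refl.
case: (eqVneq c (cmax n)) => [->|Hne]; first exact: star_refl.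
have [w0 Hw0] : exists w, c w < n.-1.
  case: (pickP (fun w => c w < n.-1)) => [w Hw|H]; first by exists w.
  exfalso; move/eqP: Hne; apply; apply/ffunP => w; rewrite ffunE.
  by move: (H w) (Hs w) => /= /negbT; clear; lia.
clear Hne.
have [i Hi] := exists_top Hs HP.
pose x' : config n := [ffun w => if w == i then n.-1 else minn (c w).+1 n.-1].
have Hcount k : k <= n.-1 -> #|[set w | x' w < k]| <= k.-1.
  move=> Hk; apply: leq_trans (HP k.-1).
  apply: subset_leq_card; apply/subsetP => w; rewrite !inE ffunE.
  by case: eqP => _ /=; lia.
have Hxs : stable x' by move=> w; rewrite ffunE; case: eqP => _ //; exact: geq_minr.
have HxP : Pk x'.
  move=> k; case: (leqP k n.-1) => Hk; first by apply: leq_trans (Hcount k Hk) (leq_pred _).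
  apply: leq_trans (max_card _) _; rewrite card_ord; lia.
have HxQ : forall k, 0 < k < n -> #|[set w | x' w < k]| < k.
  move=> k /andP [Hk0 Hkn]; apply: leq_ltn_trans (Hcount k _) _; lia.
have Hxi : x' i = n.-1 by rewrite ffunE eqxx.
have Hle : forall w, c w <= x' w.
  move=> w; rewrite ffunE; case: eqP => [->|_]; first by rewrite Hi.
  by have := Hs w; lia.
have Hlt : csum c < csum x'.
  apply: csum_lt => //.
  exists w0; rewrite ffunE; case: eqP => [E|_]; first by move: Hw0; rewrite E Hi ltnn.
  by move: Hw0; lia.
have Hcx := csum_le_stable Hxs.
have IHx := IH x' ltac:(lia) Hxs HxP.
apply: star_trans IHx _.
apply: star_step (aval_chain Hxs Hxi HxQ) _.
apply: additions => // w; rewrite ffunE; case: (eqVneq w i) => [->|Hwi]; first by rewrite Hxi Hi.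
rewrite ffunE (negbTE Hwi); have := Hs w; clear; lia.
Qed.

Lemma P_DR c : stable c -> Pk c -> DR c.
Proof.
move=> Hs HP; apply/recurrentP; split => //.
exact: (P_reach (leqnn _)).
Qed.

End PDR.

Section Drop.
Variable n : nat.
Implicit Types c d x y z : config n.

Lemma bounce m d (B : {set 'I_n}) : #|B| = m -> (forall w, w \in B -> d w = n) ->
  star (@ssm_topple n) d [ffun w => if w \in B then d w - 1 else d w].
Proof.
elim: m d B => [|m IH] d B Hm HB.
  have -> : [ffun w => if w \in B then d w - 1 else d w] = d.
    apply/ffunP => w; rewrite ffunE; move/eqP: Hm; rewrite cards_eq0 => /eqP ->.
    by rewrite in_set0.
  exact: star_refl.
have [w Hw] : exists w, w \in B by apply/card_gt0P; rewrite Hm.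
pose d' : config n := [ffun j => if j == w then d j - (#|(set0 : {set 'I_n})| + true)
                                else d j + (j \in (set0 : {set 'I_n}))].
apply: (star_step (y := d')).
  exists w, set0, true; split => //; first by rewrite HB.
  by rewrite inE.
have Hm' : #|B :\ w| = m by move: Hm; rewrite (cardsD1 w B) Hw add1n => -[].
have HB' : forall u, u \in B :\ w -> d' u = n.
  by move=> u; rewrite !inE ffunE => /andP [/negbTE -> Hu]; rewrite in_set0 addn0 HB.
have -> : [ffun w0 => if w0 \in B then d w0 - 1 else d w0] =
          [ffun u => if u \in B :\ w then d' u - 1 else d' u].
  apply/ffunP => u; rewrite !ffunE !inE ?cards0.
  case: (eqVneq u w) => [->|Huw] /=; first by rewrite Hw.
  by rewrite addn0.
exact: IH.
Qed.

Lemma drop x i (S : {set 'I_n}) : stable x -> x i = n.-1 -> i \notin S ->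
  chain_step (@ssm_topple n) x
   [ffun w => if w == i then n.-1 - #|S| else if w \in S then minn (x w).+1 n.-1 else x w].
Proof.
move=> Hs Hxi HiS.
have hn : 0 < n := leq_ltn_trans (leq0n i) (ltn_ord i).
pose d1 : config n := [ffun j => if j == i then add_grain x i j - (#|S| + true)
                                else add_grain x i j + (j \in S)].
pose B := [set w in S | x w == n.-1].
exists i; split; last first.
  move=> w; rewrite ffunE; case: eqP => _; first exact: leq_subr.
  by case: (w \in S); [exact: geq_minr | exact: Hs].
apply: (star_step (y := d1)).
  exists i, S, true; split => //; rewrite ffunE eqxx Hxi; lia.
have HB : forall w, w \in B -> d1 w = n.
  move=> w; rewrite !inE => /andP [HwS /eqP Hw].
  have Hwi : w != i by apply: contraNneq HiS => <-.
  by rewrite ffunE (negbTE Hwi) HwS ffunE (negbTE Hwi) Hw; lia.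
have -> : [ffun w => if w == i then n.-1 - #|S| else if w \in S then minn (x w).+1 n.-1 else x w]
  = [ffun w => if w \in B then d1 w - 1 else d1 w].
  apply/ffunP => w; rewrite !ffunE !inE.
  case: (eqVneq w i) => [->|Hwi] /=.
    by rewrite (negbTE HiS) /= Hxi; clear; lia.
  case: (boolP (w \in S)) => HwS; last by rewrite /= !addn0.
  rewrite /=.
  have := Hs w; case: (eqVneq (x w) n.-1) => [Hxw|Hne] H.
    by rewrite Hxw; clear; lia.
  by move: H Hne; set a := x w; clear; move/eqP; lia.
exact: (bounce (erefl _) HB).
Qed.

Definition tourn (r : rel 'I_n) :=
  (forall u, ~~ r u u) /\ (forall u v, u != v -> r u v = ~~ r v u).

Definition score (r : rel 'I_n) : config n := [ffun v => #|[set w | r v w]|].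

Definition Xp (r : rel 'I_n) (j : nat) : config n :=
  [ffun v : 'I_n => if v < j then #|[set w : 'I_n | (w < j) && r v w]| else n.-1].

Lemma Xp_step r j (Hj : j < n) : tourn r ->
  chain_step (@ssm_topple n) (Xp r j) (Xp r j.+1).
Proof.
move=> [Hirr Hant].
pose jo := Ordinal Hj.
pose S := [set w | (w != jo) && ((j < w) || r w jo)].
have Hcnt k v : #|[set w : 'I_n | (w < k) && r v w]| <= n.-1.
  have -> : n.-1 = #|[set~ v]| by rewrite cardsC1 card_ord.
  apply: subset_leq_card; apply/subsetP => w; rewrite !inE => /andP [_ H].
  by apply: contraTneq H => ->; apply: Hirr.
have Hs : stable (Xp r j).
  by move=> v; rewrite ffunE; case: ifP => _.
have Hjo : Xp r j jo = n.-1 by rewrite ffunE ltnn.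
have HjoS : jo \notin S by rewrite inE eqxx.
have Hneq (v : 'I_n) : v != jo -> (nat_of_ord v == j) = false.
  move=> Hv; apply/negP => /eqP E; move: Hv; rewrite (_ : v = jo) ?eqxx //.
  by apply: val_inj.
have Hnew (v : 'I_n) : v < j -> #|[set w : 'I_n | (w < j.+1) && r v w]| =
                        #|[set w : 'I_n | (w < j) && r v w]| + r v jo.
  move=> Hv.
  rewrite (cardsD1 jo) inE ltnSn /= addnC; congr (_ + _).
  apply: eq_card => w; rewrite !inE.
  case: (eqVneq w jo) => [->|Hw] /=; first by rewrite ltnn.
  by rewrite ltnS leq_eqVlt Hneq.
have := drop Hs Hjo HjoS.
have -> : [ffun w => if w == jo then n.-1 - #|S| else if w \in S then minn (Xp r j w).+1 n.-1 else Xp r j w]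
   = Xp r j.+1.
  apply/ffunP => v; rewrite !ffunE.
  case: (eqVneq v jo) => [->|Hv].
    rewrite ltnSn.
    have HA := cardsID S [set~ jo].
    have E1 : [set~ jo] :&: S = S.
      by apply/setP => w; rewrite !inE; case: (w == jo).
    have E2 : [set~ jo] :\: S = [set w : 'I_n | (w < j.+1) && r jo w].
      apply/setP => w; rewrite !inE.
      case: (eqVneq w jo) => [->|Hw] /=; first by rewrite (negbTE (Hirr jo)) andbF.
      rewrite (Hant _ _ Hw) ltnS; case: leqP => _; by case: (r jo w).
    rewrite E1 E2 cardsC1 card_ord in HA.
    move: HA; set a := #|S|; set b := #|_|; clear; lia.
  rewrite inE Hv /=.
  case: (ltngtP v j) => Hvj' /=.
  - rewrite ltnS (ltnW Hvj') Hnew //=.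
    have := Hcnt j.+1 v; rewrite Hnew //.
    case: (r v jo) => /=; last by rewrite addn0.
    by set a := #|_|; clear; lia.
  - by rewrite ltnS leqNgt Hvj' /=; apply/minn_idPr.
  - by move: (Hneq v Hv); rewrite Hvj' eqxx.
done.
Qed.

Lemma Xp_reach r j : tourn r -> j <= n ->
  star (chain_step (@ssm_topple n)) (cmax n) (Xp r j).
Proof.
move=> Hr; elim: j => [|j IH] Hj.
  have -> : Xp r 0 = cmax n by apply/ffunP => v; rewrite !ffunE.
  exact: star_refl.
apply: star_trans (IH (ltnW Hj)) _.
exact: star_one (Xp_step Hj Hr).
Qed.

Lemma score_SR r c : tourn r -> stable c -> (forall v, score r v <= c v) -> SR c.
Proof.
move=> Hr Hs Hle; apply/recurrentP; split => //.
apply: star_trans (Xp_reach Hr (leqnn n)) _.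
apply: additions => // v; rewrite ffunE (ltn_ord v).
apply: leq_trans (Hle v); rewrite ffunE.
by apply: subset_leq_card; apply/subsetP => w; rewrite !inE ltn_ord.
Qed.

End Drop.

Section Spread.
Variable n : nat.
Implicit Types c d x y z : config n.

Definition spr c (u v : 'I_n) : config n :=
  [ffun w => if w == u then (c u).+1 else if w == v then (c v).-1 else c w].

Lemma sum_eq1 (A : {set 'I_n}) v : \sum_(w in A) ((w == v) : nat) = (v \in A).
Proof.
case: (boolP (v \in A)) => Hv.
  rewrite (bigD1 v) //= eqxx big1 // => w /andP [_ /negbTE ->] //.
rewrite big1 // => w Hw; case: eqP => // E; by move: Hv; rewrite -E Hw.
Qed.

Lemma spr_sum c u v (A : {set 'I_n}) : u != v -> c u = c v -> 0 < c u ->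
  \sum_(w in A) spr c u v w + (v \in A) = \sum_(w in A) c w + (u \in A).
Proof.
move=> Huv Ec Hc.
rewrite -!sum_eq1 -!big_split /=; apply: eq_bigr => w _.
rewrite ffunE; case: (eqVneq w u) => [->|Hwu]; first by rewrite (negbTE Huv) addn0 addn1.
case: (eqVneq w v) => [->|Hwv] /=; last by [].
by rewrite -Ec; clear -Hc; lia.
Qed.

Lemma arith_spread (C1 a s m X : nat) : C1 <= s -> C1 + a + a.+1 <= m + (m + s) ->
  X + 1 = m + s -> C1 + a <= X.
Proof. lia. Qed.

Lemma good_spread c u v : good c -> u != v -> c u = c v -> 0 < c u -> good (spr c u v).
Proof.
move=> Hg Huv Ec Hc A.
have Hs := spr_sum A Huv Ec Hc.
case: (boolP (v \in A)) => HvA; last first.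
  apply: leq_trans (Hg A) _; move: Hs; rewrite (negbTE HvA) addn0.
  set s1 := \sum_(w in A) _; set s2 := \sum_(w in A) _; clear; lia.
case: (boolP (u \in A)) => HuA.
  apply: leq_trans (Hg A) _; move: Hs; rewrite HvA HuA.
  set s1 := \sum_(w in A) _; set s2 := \sum_(w in A) _; clear; lia.
rewrite (negbTE HuA) addn0 in Hs.
have HA1 : #|A| = (#|A :\ v|).+1 by rewrite (cardsD1 v A) HvA.
have G1 := Hg (A :\ v).
have G2 := Hg (u |: A).
rewrite big_setU1 //= cardsU1 HuA add1n in G2.
rewrite [X in _ = X](big_setD1 v HvA) HvA -Ec /= in Hs.
rewrite (big_setD1 v HvA) /= in G2.
rewrite HA1 bin2S.
rewrite HA1 !bin2S -Ec in G2.
exact: (arith_spread G1 G2 Hs).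
Qed.

Lemma pigeon (f : 'I_n -> nat) k (L : {set 'I_n}) :
  (forall w, w \in L -> f w < k) -> {in L &, injective f} -> #|L| <= k.
Proof.
move=> Hk Hinj.
pose g w : 'I_k.+1 := inord (f w).
have Hg : {in L &, injective g}.
  move=> w1 w2 H1 H2; rewrite /g => /(congr1 (@nat_of_ord _)).
  rewrite !inordK; [exact: Hinj | exact: ltnW (Hk _ H2) | exact: ltnW (Hk _ H1)].
rewrite -(card_in_imset Hg).
apply: (@leq_trans #|[set~ (ord_max : 'I_k.+1)]|); last by rewrite cardsC1 card_ord.
apply: subset_leq_card; apply/subsetP => _ /imsetP [w Hw ->].
rewrite !inE /g; apply/eqP => /(congr1 (@nat_of_ord _)); rewrite /= inordK; last exact: ltnW (Hk _ Hw).
move=> E.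
by have := Hk w Hw; rewrite E ltnn.
Qed.

Lemma exists_pair c k : stable c -> good c -> k < #|[set w | c w < k]| ->
  exists u v, [/\ u != v, c u = c v, 0 < c u & (c u).+1 <= n.-1].
Proof.
move=> Hs Hg Hk.
set L := [set w | c w < k] in Hk.
case: (pickP (fun p : 'I_n * 'I_n => [&& p.1 \in L, p.2 \in L, p.1 != p.2 & c p.1 == c p.2]))
  => [[u v] /and4P [Hu Hv Huv /eqP E]|H]; last first.
  exfalso; suff : #|L| <= k by rewrite leqNgt Hk.
  apply: (pigeon (f := fun w => c w)); first by move=> w; rewrite /L inE.
  move=> w1 w2 H1 H2 E.
  apply/eqP; apply: contraT => Hne; move: (H (w1, w2)); rewrite /= H1 H2 Hne E eqxx.
  by [].
exists u, v; split => //.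
  rewrite lt0n; apply/negP => /eqP H0.
  have := Hg [set u; v]; rewrite cards2 Huv.
  rewrite big_setU1 ?inE //= big_set1 -E H0.
  by [].
have HL : #|L| <= n by apply: leq_trans (max_card _) _; rewrite card_ord.
move: Hu; rewrite /L inE => Hu.
move: Hk HL Hu; set l := #|L|; set a := c u; clear; lia.
Qed.

Lemma sqarith m R : 0 < m -> m.+1 * m.+1 + (m.-1 * m.-1 + R) = (m * m + (m * m + R)).+2.
Proof. case: m => // p _ /=. rewrite !mulSn !mulnS. lia. Qed.

Definition sq c := \sum_(w < n) c w * c w.

Lemma sq_spr c u v : u != v -> c u = c v -> 0 < c u -> sq (spr c u v) = (sq c).+2.
Proof.
move=> Huv Ec Hc; rewrite /sq (bigD1 u) //= [in RHS](bigD1 u) //=.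
rewrite (bigD1 v) /=; last by rewrite eq_sym.
rewrite [in RHS](bigD1 v) /=; last by rewrite eq_sym.
have -> : \sum_(i < n | (i != u) && (i != v)) spr c u v i * spr c u v i =
          \sum_(i < n | (i != u) && (i != v)) c i * c i.
  apply: eq_bigr => w /andP [/negbTE H1 /negbTE H2]; by rewrite ffunE H1 H2.
have Hvu : v != u by rewrite eq_sym.
rewrite !ffunE eqxx (negbTE Hvu) eqxx -Ec.
exact: sqarith.
Qed.

Lemma sq_le c : stable c -> sq c <= n * (n.-1 * n.-1).
Proof.
move=> Hs; rewrite /sq.
apply: (@leq_trans (\sum_(i < n) n.-1 * n.-1)); first by apply: leq_sum => i _; apply: leq_mul.
by rewrite sum_nat_const card_ord.
Qed.

Lemma spr_stable c u v : stable c -> u != v -> (c u).+1 <= n.-1 -> stable (spr c u v).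
Proof.
move=> Hs Huv Hu w; rewrite ffunE; case: eqP => // _; case: eqP => _ //.
exact: leq_trans (leq_pred _) (Hs v).
Qed.

Definition Pkb c := [forall k : 'I_n.+1, #|[set w | c w < k]| <= k].

Lemma PkbP c : Pkb c -> Pk c.
Proof.
move=> /forallP H k; case: (leqP k n) => Hk.
  by have := H (Ordinal (Hk : k < n.+1)).
by apply: leq_trans (max_card _) _; rewrite card_ord ltnW.
Qed.

Lemma notPkb c : ~~ Pkb c -> exists k, k < #|[set w | c w < k]|.
Proof.
move=> /forallPn [k Hk]; exists k; by rewrite ltnNge.
Qed.

End Spread.

Section Tourn.
Variable n : nat.
Implicit Types c d : config n.

Definition flip (r : rel 'I_n) (a b : 'I_n) : rel 'I_n :=
  fun x y => if (x == a) && (y == b) then false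
             else if (x == b) && (y == a) then true else r x y.

Lemma flip_tourn (r : rel 'I_n) a b : tourn r -> a != b -> tourn (flip r a b).
Proof.
move=> [Hirr Hant] Hab; split.
  move=> x; rewrite /flip.
  have H1 : (x == a) && (x == b) = false.
    by apply/negbTE; apply: contra Hab => /andP [/eqP <- /eqP <-].
  have H2 : (x == b) && (x == a) = false by rewrite andbC.
  by rewrite H1 H2 (negbTE (Hirr x)).
move=> x y Hxy; rewrite /flip.
have Hba : b != a by rewrite eq_sym.
case: (eqVneq x a) => [Exa|Hxa]; case: (eqVneq y b) => [Eyb|Hyb];
  case: (eqVneq x b) => [Exb|Hxb]; case: (eqVneq y a) => [Eya|Hya] => //=;
  rewrite ?andbF ?andbT //=; try (by apply: Hant).
all: try (by move: Hab; rewrite -Exa Exb eqxx).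
all: try (by move: Hab; rewrite -Eya Eyb eqxx).
all: try (by move: Hxy; rewrite Exa Eya eqxx).
all: try (by move: Hxy; rewrite Exb Eyb eqxx).
Qed.


Lemma flip_score_a (r : rel 'I_n) a b : a != b -> r a b ->
  score (flip r a b) a = (score r a).-1.
Proof.
move=> Hab Hrab; rewrite !ffunE.
rewrite [in RHS](cardsD1 b) inE Hrab add1n /=.
apply: eq_card => w; rewrite !inE /flip eqxx /=.
case: (eqVneq w b) => [->|Hwb] //=.
by rewrite (negbTE Hab).
Qed.

Lemma flip_score_b (r : rel 'I_n) a b : tourn r -> a != b -> r a b ->
  score (flip r a b) b = (score r b).+1.
Proof.
move=> [Hirr Hant] Hab Hrab; rewrite !ffunE.
have Hrba : r b a = false by rewrite Hant ?Hrab // eq_sym.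
have Hba : b != a by rewrite eq_sym.
have Ha : a \in [set w | flip r a b b w].
  by rewrite inE /flip (negbTE Hba) !eqxx.
rewrite (cardsD1 a) Ha add1n; congr _.+1.
apply: eq_card => w; rewrite !inE /flip (negbTE Hba) /= eqxx /=.
case: (eqVneq w a) => [->|Hwa] //=; by rewrite Hrba.
Qed.

Lemma flip_score_o (r : rel 'I_n) a b x : x != a -> x != b ->
  score (flip r a b) x = score r x.
Proof.
move=> Hxa Hxb; rewrite !ffunE; apply: eq_card => w; rewrite !inE /flip.
by rewrite (negbTE Hxa) (negbTE Hxb).
Qed.

Lemma flip_other (r : rel 'I_n) a b x y : ~~ ((x == a) && (y == b)) -> ~~ ((x == b) && (y == a)) ->
  flip r a b x y = r x y.
Proof. by rewrite /flip => /negbTE -> /negbTE ->. Qed.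

Lemma score_le_n (r : rel 'I_n) v : tourn r -> score r v <= n.
Proof. by move=> _; rewrite ffunE; apply: leq_trans (max_card _) _; rewrite card_ord. Qed.

Lemma tourn_base c : Pk c -> exists r, tourn r /\ forall v, score r v <= c v.
Proof.
move=> HP.
exists (fun u v => (c v < c u) || ((c v == c u) && (v < u))); split.
  split => [u|u v Huv]; first by rewrite ltnn eqxx ltnn.
  case: (ltngtP (c u) (c v)) => H /=; rewrite ?andbF ?orbF //. case: (ltngtP (nat_of_ord u) v) => //= E.
  by move: Huv; rewrite (val_inj E) eqxx.
move=> u; rewrite ffunE.
apply: (@leq_trans #|[set w | c w < (c u).+1] :\ u|).
  apply: subset_leq_card; apply/subsetP => w; rewrite !inE.
  case/orP => [H|/andP [/eqP E Hwu]].
    by rewrite ltnS ltnW // andbT; apply: contraTneq H => ->; rewrite ltnn.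
  rewrite E ltnSn andbT; apply: contraTneq Hwu => ->; by rewrite ltnn.
have := HP (c u).+1; rewrite (cardsD1 u) inE ltnSn add1n ltnS.
by [].
Qed.

Lemma tourn_exists m c : n * (n.-1 * n.-1) - sq c <= m -> stable c -> good c ->
  exists r, tourn r /\ forall v, score r v <= c v.
Proof.
elim: m c => [|m IH] c Hm Hs Hg.
  case: (boolP (Pkb c)) => HP; first by apply: tourn_base; apply: PkbP.
  have [k Hk] := notPkb HP.
  have [u [v [Huv Ec Hc Hu]]] := exists_pair Hs Hg Hk.
  have := sq_le (spr_stable Hs Huv Hu); rewrite sq_spr //; move: Hm.
  set N := n * _; set q := sq c; clear; lia.
case: (boolP (Pkb c)) => HP; first by apply: tourn_base; apply: PkbP.
have [k Hk] := notPkb HP.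
have [u [v [Huv Ec Hc Hu]]] := exists_pair Hs Hg Hk.
set c' := spr c u v.
have Hs' : stable c' := spr_stable Hs Huv Hu.
have Hg' : good c' := good_spread Hg Huv Ec Hc.
have Hq := sq_spr Huv Ec Hc.
have Hq' := sq_le Hs'.
have Hm' : n * (n.-1 * n.-1) - sq c' <= m.
  move: Hq Hq' Hm; rewrite -/c'; set N := n * _; set q := sq c; set q' := sq c'; clear; lia.
have [r' [Hr' Hsc']] := IH c' Hm' Hs' Hg'.
have Hc'u : c' u = (c u).+1 by rewrite ffunE eqxx.
have Hc'v : c' v = (c v).-1 by rewrite ffunE eqxx (negbTE (_ : v != u)) // eq_sym.
have Hc'o w : w != u -> w != v -> c' w = c w by move=> H1 H2; rewrite ffunE (negbTE H1) (negbTE H2).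
have Hvu : v != u by rewrite eq_sym.
have [Hirr Hant] := Hr'.
case: (leqP (score r' u) (c u)) => Hsu.
  exists r'; split => // w.
  case: (eqVneq w u) => [->|Hwu] //.
  case: (eqVneq w v) => [->|Hwv]; first by have := Hsc' v; rewrite Hc'v => H; apply: leq_trans H (leq_pred _).
  by rewrite -Hc'o //; apply: Hsc'.
have Hsu' : score r' u = (c u).+1 by have := Hsc' u; rewrite Hc'u; clear -Hsu; lia.
case: (boolP (r' u v)) => Hruv.
  exists (flip r' u v); split; first exact: flip_tourn.
  move=> w; case: (eqVneq w u) => [->|Hwu]; first by rewrite flip_score_a // Hsu'.
  case: (eqVneq w v) => [->|Hwv].
    rewrite flip_score_b //; have := Hsc' v; rewrite Hc'v -Ec; clear -Hc; lia.
  by rewrite flip_score_o // -Hc'o //; apply: Hsc'.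
have Hrvu : r' v u by rewrite Hant // Hruv.
have [w Hw] : exists w, w \in [set y | r' u y] :\: [set y | r' v y].
  apply/set0Pn; rewrite setD_eq0; apply/negP => Hsub.
  have := subset_leq_card Hsub; have := Hsc' v; have := Hsu'.
  rewrite Hc'v -Ec !ffunE.
  set a := #|[set w | r' u w]|; set b := #|[set w | r' v w]|; clear -Hc; lia.
move: Hw; rewrite !inE => /andP [Hnvw Hruw].
have Hwu : w != u by apply: contraTneq Hruw => ->; apply: Hirr.
have Hwv : w != v by apply: contraTneq Hruw => ->; exact: Hruv.
have Hrwv : r' w v by rewrite Hant // (negbTE Hnvw).
have Huw : u != w by rewrite eq_sym.
pose r1 := flip r' u w.
have Hr1 : tourn r1 := flip_tourn Hr' Huw.
have Hr1wv : r1 w v.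
  rewrite /r1 flip_other //; first by rewrite (negbTE Hwu).
  by rewrite (negbTE Hvu) andbF.
exists (flip r1 w v); split; first exact: flip_tourn.
have Hvw : v != w by rewrite eq_sym.
move=> x.
case: (eqVneq x u) => [->|Hxu].
  by rewrite (flip_score_o _ Huw Huv) /r1 (flip_score_a Huw Hruw) Hsu'.
case: (eqVneq x w) => [->|Hxw].
  rewrite (flip_score_a Hwv Hr1wv) /r1 (flip_score_b Hr' Huw Hruw) /= -Hc'o //; exact: Hsc'.
case: (eqVneq x v) => [->|Hxv].
  rewrite (flip_score_b Hr1 Hwv Hr1wv) /r1 (flip_score_o _ Hvu Hvw).
  have := Hsc' v; rewrite Hc'v -Ec; set a := score r' v; clear -Hc; lia.
by rewrite (flip_score_o _ Hxw Hxv) /r1 (flip_score_o _ Hxu Hxw) -Hc'o //; apply: Hsc'.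
Qed.

End Tourn.

From mathcomp Require Import ring lra.

Lemma split_l m k (i : 'I_m) : split (lshift k i) = inl i.
Proof. exact: (unsplitK (inl i)). Qed.
Lemma split_r m k (i : 'I_k) : split (rshift m i) = inr i.
Proof. exact: (unsplitK (inr i)). Qed.

Section Conv.
Import GRing.Theory Num.Theory.
Local Open Scope ring_scope.
Variable R : realType.
Variable n : nat.
Hypothesis hn : (0 < n)%N.
Implicit Types c d : config n.

Lemma spr_pair c u v w : u != v -> c u = c v -> (0 < c u)%N ->
  (spr c u v w + spr c v u w = 2 * c w)%N.
Proof.
move=> Huv Ec Hc; rewrite !ffunE.
case: (eqVneq w u) => [->|Hwu]; first by rewrite (negbTE Huv); move: Hc; clear; lia.
case: (eqVneq w v) => [->|Hwv] /=; last by lia.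
by rewrite -Ec; move: Hc; clear; lia.
Qed.

Lemma conv_exists m c : (n * (n.-1 * n.-1) - sq c <= m)%N -> stable c -> good c ->
  in_conv_DR R c.
Proof.
elim: m c => [|m IH] c Hm Hs Hg; case: (boolP (Pkb c)) => HP.
- exists 1%N, (fun _ => c), (fun _ => 1); split.
  + by move=> _; apply: P_DR => //; apply: PkbP.
  + by move=> _; apply/andP; split; lra.
  + by rewrite big_ord1.
  + by move=> v; rewrite big_ord1 mul1r.
- have [k Hk] := notPkb HP.
  have [u [v [Huv Ec Hc Hu]]] := exists_pair Hs Hg Hk.
  have := sq_le (spr_stable Hs Huv Hu); rewrite sq_spr //; move: Hm.
  set N := (n * _)%N; set q := sq c; clear; lia.
- exists 1%N, (fun _ => c), (fun _ => 1); split.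
  + by move=> _; apply: P_DR => //; apply: PkbP.
  + by move=> _; apply/andP; split; lra.
  + by rewrite big_ord1.
  + by move=> v; rewrite big_ord1 mul1r.
have [k Hk] := notPkb HP.
have [u [v [Huv Ec Hc Hu]]] := exists_pair Hs Hg Hk.
have Hvu : v != u by rewrite eq_sym.
have Hu' : ((c v).+1 <= n.-1)%N by rewrite -Ec.
have Hc' : (0 < c v)%N by rewrite -Ec.
have Step : forall a b, a != b -> c a = c b -> (0 < c a)%N -> ((c a).+1 <= n.-1)%N ->
    in_conv_DR R (spr c a b).
  move=> a b Hab Eab Ha Ha'.
  have Hs' := spr_stable Hs Hab Ha'.
  apply: IH => //; last exact: good_spread.
  have := sq_spr Hab Eab Ha; have := sq_le Hs'; move: Hm.
  set N := (n * _)%N; set q := sq c; set q' := sq _; clear; lia.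
have [k1 [cs1 [lam1 [D1 L1 S1 V1]]]] := Step u v Huv Ec Hc Hu.
have [k2 [cs2 [lam2 [D2 L2 S2 V2]]]] := Step v u Hvu (esym Ec) Hc' Hu'.
exists (k1 + k2)%N,
  (fun l => match split l with inl a => cs1 a | inr b => cs2 b end),
  (fun l => match split l with inl a => lam1 a / 2 | inr b => lam2 b / 2 end); split.
- by move=> l; case: (split l) => a.
- move=> l; case: (split l) => a.
    by have /andP [H1 H2] := L1 a; apply/andP; split; lra.
  by have /andP [H1 H2] := L2 a; apply/andP; split; lra.
- rewrite big_split_ord /=.
  under eq_bigr => i _ do rewrite split_l.
  under [X in _ + X]eq_bigr => i _ do rewrite split_r.
  rewrite -!mulr_suml S1 S2; lra.
- move=> w; rewrite big_split_ord /=.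
  under eq_bigr => i _ do rewrite split_l mulrAC.
  under [X in _ + X]eq_bigr => i _ do rewrite split_r mulrAC.
  rewrite -!mulr_suml -V1 -V2.
  have E := spr_pair w Huv Ec Hc.
  have E' : ((spr c u v w)%:R + (spr c v u w)%:R : R) = 2 * (c w)%:R.
    by rewrite -natrD E natrM.
  lra.
Qed.

End Conv.

Section ConvGood.
Import GRing.Theory Num.Theory Order.POrderTheory.
Local Open Scope ring_scope.
Variable R : realType.
Variable n : nat.
Hypothesis hn : (0 < n)%N.

Lemma conv_good (c : config n) : in_conv_DR R c -> stable c /\ good c.
Proof.
case=> k [cs [lam [HD HL HS HV]]].
have HDg l := DR_good hn (HD l).
have Hlam l : 0 <= lam l by have /andP [] := HL l.
split.
  move=> v; rewrite -(ler_nat R) HV.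
  rewrite [X in _ <= X](_ : _ = \sum_(l < k) lam l * (n.-1)%:R); last first.
    by rewrite -mulr_suml HS mul1r.
  apply: ler_sum => l _; apply: ler_wpM2l; first exact: Hlam.
  by rewrite ler_nat; apply: (HDg l).1.
move=> A; rewrite -(ler_nat R) natr_sum.
under eq_bigr => v _ do rewrite HV.
rewrite exchange_big /=.
rewrite [X in X <= _](_ : _ = \sum_(l < k) lam l * ('C(#|A|, 2))%:R); last first.
  by rewrite -mulr_suml HS mul1r.
apply: ler_sum => l _; rewrite -mulr_sumr; apply: ler_wpM2l; first exact: Hlam.
by rewrite -natr_sum ler_nat; apply: (HDg l).2.
Qed.

End ConvGood.

Theorem theorem4p1 (R : realType) (n : nat) (hn : (1 <= n)%N) (c : config n) :
  SR c <-> in_conv_DR R c.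
Proof.
split.
  by move=> /SR_good [Hs Hg]; exact: (conv_exists R hn (leqnn _) Hs Hg).
move=> /(conv_good hn) [Hs Hg].
have [r [Hr Hle]] := tourn_exists (leqnn _) Hs Hg.
exact: score_SR Hr Hs Hle.
Qed.
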